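(* Let $\mathcal{F}$ be a complete pointed virtually inscribable fan in $\mathbb{R}^2$ with $n\ge3$ regions and profile $\beta=(\beta_0,\dots,\beta_{n-1})$ (indices modulo $n$). If $n$ is odd, then $\mathcal{F}$ is inscribable if and only if $\beta_{j}-\beta_{j+1}+\beta_{j+2}-\cdots-\beta_{j+n-2}+\beta_{j+n-1}>0$ for all $0\le j<n$. If $n=2m$ is even, then $\mathcal{F}$ is inscribable if and only if $\sum_{i=1}^{h}\beta_{2i+j}+\sum_{i=h+1}^{m-1}\beta_{2i+1+j}<\pi$ for all $0\le h<m$ and $0\le j<n$.
   Context: The regions $R_0,\dots,R_{n-1}$ of $\mathcal{F}$ are ordered counterclockwise and $\beta_i\in(0,\pi)$ is the angle of $R_i$; $\beta$ determines $\mathcal{F}$ up to rotation. A fan is inscribable if it is the normal fan of a polygon whose vertices lie on a circle. The fan is virtually inscribable if there is a nonzero $v\in\mathbb{R}^2$ fixed by the composition of the reflections in the $n$ rays of $\mathcal{F}$ taken in cyclic order (equivalently: for $n$ odd always; for $n$ even iff the alternate angles $\beta_0+\beta_2+\cdots+\beta_{n-2}$ sum to $\pi$). *)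

(* Defs.v *)
From Stdlib Require Import Reals Lra Lia Arith.
Open Scope R_scope.

Fixpoint rsum (f : nat -> R) (k : nat) : R :=
  match k with O => 0 | S k' => rsum f k' + f k' end.

Definition bt (n : nat) (beta : nat -> R) (i : nat) : R := beta (i mod n).

(* direction angle of ray k (ray 0 fixed at angle 0: the fan is determined by
   beta up to rotation, and inscribability is rotation invariant) *)
Definition theta (n : nat) (beta : nat -> R) (k : nat) : R := rsum (bt n beta) (k mod n).

Definition ray (n : nat) (beta : nat -> R) (k : nat) : R * R :=
  (cos (theta n beta k), sin (theta n beta k)).

Definition dot (p q : R * R) : R := fst p * fst q + snd p * snd q.

Definition region (n : nat) (beta : nat -> R) (i : nat) (x : R * R) : Prop :=
  exists a b : R, 0 <= a /\ 0 <= b /\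
    x = (a * fst (ray n beta i) + b * fst (ray n beta (S i)),
         a * snd (ray n beta i) + b * snd (ray n beta (S i))).

(* normal cone at v of the polygon P = conv {V 0, ..., V (n-1)}:
   the u with <u,x> <= <u,v> for all x in P (equivalently for all generators) *)
Definition normal_cone (n : nat) (V : nat -> R * R) (v : R * R) (u : R * R) : Prop :=
  forall j, (j < n)%nat -> dot u (V j) <= dot u v.

(* the fan with profile beta is the normal fan of conv{V 0..V (n-1)}:
   the maximal cones (normal cones of the vertices) are exactly the regions *)
Definition is_normal_fan_of (n : nat) (beta : nat -> R) (V : nat -> R * R) : Prop :=
  forall i, (i < n)%nat -> forall u, region n beta i u <-> normal_cone n V (V i) u.

Definition inscribable (n : nat) (beta : nat -> R) : Prop :=
  exists (V : nat -> R * R) (c : R * R) (r : R),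
    0 < r /\
    (forall i, (i < n)%nat ->
       (fst (V i) - fst c) ^ 2 + (snd (V i) - snd c) ^ 2 = r ^ 2) /\
    is_normal_fan_of n beta V.

(* reflection in the line spanned by the unit vector u *)
Definition refl (u x : R * R) : R * R :=
  (2 * dot u x * fst u - fst x, 2 * dot u x * snd u - snd x).

Fixpoint comp_refl (n : nat) (beta : nat -> R) (k : nat) (x : R * R) : R * R :=
  match k with
  | O => x
  | S k' => refl (ray n beta k') (comp_refl n beta k' x)
  end.

Definition virtually_inscribable (n : nat) (beta : nat -> R) : Prop :=
  exists v : R * R, v <> (0, 0) /\ comp_refl n beta n v = v.

Definition complete_pointed_profile (n : nat) (beta : nat -> R) : Prop :=
  (forall i, (i < n)%nat -> 0 < beta i < PI) /\ rsum beta n = 2 * PI.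

(* Main.v *)
Require Import Defs.
From Stdlib Require Import Reals Arith Lra Lia Psatz ZArith.
Open Scope R_scope.

Lemma rsum_ext f g k : (forall i, (i < k)%nat -> f i = g i) -> rsum f k = rsum g k.
Proof. induction k; simpl; intros H; [reflexivity|]. rewrite IHk by (intros; apply H; lia). rewrite H by lia. reflexivity. Qed.

Lemma rsum_plus f g k : rsum (fun i => f i + g i) k = rsum f k + rsum g k.
Proof. induction k; simpl; [lra|]. rewrite IHk; lra. Qed.

Lemma rsum_opp f k : rsum (fun i => - f i) k = - rsum f k.
Proof. induction k; simpl; [lra|]. rewrite IHk; lra. Qed.

Lemma rsum_Sl f k : rsum f (S k) = f 0%nat + rsum (fun i => f (S i)) k.
Proof. induction k; simpl in *; [lra|]. rewrite IHk. lra. Qed.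

Lemma rsum_add f a b : rsum f (a + b) = rsum f a + rsum (fun i => f (a + i)%nat) b.
Proof. induction b; simpl. rewrite Nat.add_0_r; lra. rewrite Nat.add_succ_r; simpl. rewrite IHb; lra. Qed.

Lemma rsum_tele h k : rsum (fun i => h i - h (S i)) k = h 0%nat - h k.
Proof. induction k; simpl; [lra|]. rewrite IHk; lra. Qed.

Lemma rsum_pairs f h : rsum (fun i => f (2 * i)%nat + f (2 * i + 1)%nat) h = rsum f (2 * h).
Proof. induction h. simpl; lra.
  replace (2 * S h)%nat with (S (S (2*h))) by lia. cbn [rsum]. rewrite IHh.
  replace (2 * h + 1)%nat with (S (2*h))%nat by lia. lra. Qed.

Lemma rsum_pos f k : (0 < k)%nat -> (forall i, (i < k)%nat -> 0 < f i) -> 0 < rsum f k.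
Proof. induction k; intros Hk H; [lia|]. simpl. destruct k. simpl. assert (0 < f 0%nat) by (apply H; lia). lra.
  assert (0 < rsum f (S k)) by (apply IHk; [lia| intros; apply H; lia]). assert (0 < f (S k)) by (apply H; lia). lra. Qed.

Lemma rsum_window f k : (forall i, f (i + k)%nat = f i) -> forall j, rsum (fun i => f (j + i)%nat) k = rsum f k.
Proof. intros Hp j. induction j; [reflexivity|].
  rewrite <- IHj. destruct k. reflexivity.
  rewrite (rsum_Sl (fun i => f (j + i)%nat)). cbn [rsum].
  rewrite (rsum_ext (fun i => f (j + S i)%nat) (fun i => f (S j + i)%nat)) by (intros; f_equal; lia).
  replace (S j + k)%nat with (j + S k)%nat by lia. rewrite Hp. rewrite Nat.add_0_r. lra.
Qed.

Lemma mod_S n k : (n <> 0)%nat -> (S k mod n = S (k mod n) mod n)%nat.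
Proof. intros. replace (S k) with (k + 1)%nat by lia. replace (S (k mod n)) with (k mod n + 1)%nat by lia.
  rewrite Nat.Div0.add_mod_idemp_l. reflexivity. Qed.

Lemma mod_addn n k : ((k + n) mod n = k mod n)%nat.
Proof. replace (k + n)%nat with (k + 1 * n)%nat by lia. apply Nat.Div0.mod_add. Qed.

Lemma bt_lt n beta k : (k < n)%nat -> bt n beta k = beta k.
Proof. intros. unfold bt. rewrite Nat.mod_small; auto. Qed.

Lemma bt_per n beta k : bt n beta (k + n) = bt n beta k.
Proof. unfold bt. rewrite mod_addn. reflexivity. Qed.

Lemma bt_mod n beta k : bt n beta k = bt n beta (k mod n).
Proof. unfold bt. rewrite Nat.Div0.mod_mod. reflexivity. Qed.

Lemma rsum_bt n beta k : (k <= n)%nat -> rsum (bt n beta) k = rsum beta k.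
Proof. intros. apply rsum_ext. intros; apply bt_lt; lia. Qed.

Definition cross (p q : R * R) : R := fst p * snd q - snd p * fst q.

Lemma lag1 p v r : dot p v * dot r r = dot r v * dot r p + cross r v * cross r p.
Proof. destruct p, v, r; unfold dot, cross; simpl; ring. Qed.
Lemma lag2 p v r : cross p v * dot r r = dot r p * cross r v - cross r p * dot r v.
Proof. destruct p, v, r; unfold dot, cross; simpl; ring. Qed.

Lemma theta_lt n beta k : (k < n)%nat -> theta n beta k = rsum beta k.
Proof. intros. unfold theta. rewrite Nat.mod_small by lia. apply rsum_bt; lia. Qed.

Lemma ray_T n beta k : (n <> 0)%nat -> rsum beta n = 2 * PI -> (k <= n)%nat ->
  ray n beta k = (cos (rsum beta k), sin (rsum beta k)).
Proof. intros Hn Hs Hk. unfold ray. destruct (Nat.eq_dec k n) as [->|].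
  - unfold theta. rewrite Nat.Div0.mod_same. simpl. rewrite Hs, cos_2PI, sin_2PI, cos_0, sin_0. reflexivity.
  - rewrite theta_lt by lia. reflexivity. Qed.

Lemma ray_mod n beta k : ray n beta k = ray n beta (k mod n).
Proof. unfold ray, theta. rewrite Nat.Div0.mod_mod. reflexivity. Qed.

Lemma ray_S_mod n beta k : (n <> 0)%nat -> ray n beta (S k) = ray n beta (S (k mod n)).
Proof. intros. rewrite (ray_mod n beta (S k)), (ray_mod n beta (S (k mod n))). rewrite <- mod_S by auto. reflexivity. Qed.

Lemma region_mod n beta k u : (n <> 0)%nat -> (region n beta k u <-> region n beta (k mod n) u).
Proof. intros. unfold region. rewrite (ray_mod n beta k), (ray_S_mod n beta k) by auto. rewrite (ray_mod n beta (k mod n)), Nat.Div0.mod_mod. tauto. Qed.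

Lemma ray_unit n beta k : dot (ray n beta k) (ray n beta k) = 1.
Proof. unfold dot, ray; simpl. pose proof (sin2_cos2 (theta n beta k)). unfold Rsqr in H. lra. Qed.

Lemma ray_step n beta k : (n <> 0)%nat -> rsum beta n = 2 * PI ->
  dot (ray n beta k) (ray n beta (S k)) = cos (bt n beta k) /\
  cross (ray n beta k) (ray n beta (S k)) = sin (bt n beta k).
Proof. intros Hn Hs. rewrite (ray_mod n beta k), (ray_S_mod n beta k) by auto.
  rewrite (bt_mod n beta k). assert (Hk : (k mod n < n)%nat) by (apply Nat.mod_upper_bound; auto).
  set (k' := (k mod n)%nat) in *. rewrite !ray_T by (auto; lia). simpl. rewrite bt_lt by auto.
  unfold dot, cross; simpl. rewrite cos_plus, sin_plus. pose proof (sin2_cos2 (rsum beta k')). unfold Rsqr in H.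
  set (c := cos (rsum beta k')) in *. set (s := sin (rsum beta k')) in *.
  split.
  - transitivity (cos (beta k') * (s * s + c * c)); [ring| rewrite H; ring].
  - transitivity (sin (beta k') * (s * s + c * c)); [ring| rewrite H; ring]. Qed.

Lemma cos_2PI_add x : cos (x + 2 * PI) = cos x.
Proof. rewrite cos_plus, cos_2PI, sin_2PI. ring. Qed.
Lemma sin_2PI_add x : sin (x + 2 * PI) = sin x.
Proof. rewrite sin_plus, cos_2PI, sin_2PI. ring. Qed.

Lemma cos_le_delta d x : 0 <= d <= PI -> d <= x <= 2 * PI - d -> cos x <= cos d.
Proof. intros Hd Hx. destruct (Rle_dec x PI).
  - apply cos_decr_1; lra.
  - replace (cos x) with (cos (2 * PI - x)).
    + apply cos_decr_1; lra.
    + rewrite cos_minus, cos_2PI, sin_2PI. ring. Qed.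

Lemma chord A g : cos (A + g) - cos (A - g) = - 2 * sin A * sin g /\
                  sin (A + g) - sin (A - g) = 2 * cos A * sin g.
Proof. rewrite cos_plus, cos_minus, sin_plus, sin_minus. split; ring. Qed.

Definition Pw (n : nat) (beta : nat -> R) (g : nat -> R) : Prop :=
  (forall k, (k < n)%nat -> 0 < g k) /\
  (forall k, (k < n)%nat -> g k + g (S k) = beta k) /\ g n = g 0%nat.

Section Constr.
Variable n : nat.
Variable beta : nat -> R.
Variable g : nat -> R.
Hypothesis Hn : (2 <= n)%nat.
Hypothesis Hb : forall i, (i < n)%nat -> 0 < beta i < PI.
Hypothesis Hs : rsum beta n = 2 * PI.
Hypothesis Hg : Pw n beta g.

Let T k := rsum beta k.
Let phi j := T j + g j.

Lemma g_bnd k : (k <= n)%nat -> 0 < g k < PI.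
Proof. destruct Hg as [H1 [H2 H3]]. intros Hk. destruct (Nat.eq_dec k n) as [->|].
  - rewrite H3. assert (0 < g 0%nat) by (apply H1; lia). assert (g 0%nat + g 1%nat = beta 0%nat) by (apply H2; lia).
    assert (0 < g 1%nat) by (apply H1; lia). assert (beta 0%nat < PI) by (apply Hb; lia). lra.
  - assert (0 < g k) by (apply H1; lia). split; auto.
    assert (g k + g (S k) = beta k) by (apply H2; lia). assert (beta k < PI) by (apply Hb; lia).
    destruct (Nat.eq_dec (S k) n) as [E|].
    + rewrite E, H3 in H0. assert (0 < g 0%nat) by (apply H1; lia). lra.
    + assert (0 < g (S k)) by (apply H1; lia). lra. Qed.

Lemma phi_S k : (k < n)%nat -> phi k = T (S k) - g (S k).
Proof. destruct Hg as [H1 [H2 H3]]. intros. unfold phi, T. simpl. rewrite <- (H2 k H). ring. Qed.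

Lemma phi_mono a b : (a <= b)%nat -> (b < n)%nat -> phi a <= phi b.
Proof. intros Hab Hb'. induction b.
  - replace a with 0%nat by lia. lra.
  - destruct (Nat.eq_dec a (S b)) as [->|]. lra.
    assert (phi a <= phi b) by (apply IHb; lia).
    assert (phi b = T (S b) - g (S b)) by (apply phi_S; lia).
    assert (0 < g (S b)) by (apply g_bnd; lia). unfold phi at 2. lra. Qed.

Lemma phi_0 : phi 0%nat = g 0%nat.
Proof. unfold phi, T. simpl. ring. Qed.

Lemma phi_last : phi (n - 1)%nat = 2 * PI - g 0%nat.
Proof. destruct Hg as [H1 [H2 H3]]. rewrite phi_S by lia. replace (S (n-1)) with n by lia. unfold T. rewrite Hs, H3. ring. Qed.

Lemma keyK k j : (k <= n)%nat -> (j < n)%nat -> cos (phi j - T k) <= cos (g k).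
Proof. intros Hk Hj. pose proof (g_bnd k Hk) as Gk. pose proof phi_last as PL. pose proof phi_0 as P0.
  assert (G0 : 0 < g 0%nat) by (apply g_bnd; lia).
  destruct (le_lt_dec k j).
  - apply cos_le_delta; [lra|]. split.
    + assert (phi k <= phi j) by (apply phi_mono; lia). unfold phi at 1 in H. lra.
    + assert (phi j <= phi (n-1)%nat) by (apply phi_mono; lia).
      destruct k. unfold T; simpl. lra.
      assert (phi k = T (S k) - g (S k)) by (apply phi_S; lia).
      assert (phi 0%nat <= phi k) by (apply phi_mono; lia). lra.
  - rewrite <- cos_neg. apply cos_le_delta; [lra|]. split.
    + destruct k. lia. assert (phi j <= phi k) by (apply phi_mono; lia).
      assert (phi k = T (S k) - g (S k)) by (apply phi_S; lia). lra.
    + assert (phi 0%nat <= phi j) by (apply phi_mono; lia).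
      destruct (Nat.eq_dec k n) as [->|].
      * destruct Hg as [_ [_ H3]]. unfold T. rewrite Hs, H3. lra.
      * assert (phi k <= phi (n-1)%nat) by (apply phi_mono; lia). unfold phi at 1 in H0. lra. Qed.

Definition Vc j : R * R := (cos (phi j), sin (phi j)).

Lemma dot_ray_V k j : (k <= n)%nat -> dot (ray n beta k) (Vc j) = cos (phi j - T k).
Proof. intros. rewrite ray_T by (auto; lia). unfold dot, Vc; simpl. rewrite cos_minus. unfold T. ring. Qed.

Lemma constr_fan : is_normal_fan_of n beta Vc.
Proof. intros i Hi u. assert (Hn0 : (n <> 0)%nat) by lia. split.
  - intros [a [b [Ha [Hb0 ->]]]] j Hj.
    assert (E : forall v, dot (a * fst (ray n beta i) + b * fst (ray n beta (S i)),
                   a * snd (ray n beta i) + b * snd (ray n beta (S i))) v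
                = a * dot (ray n beta i) v + b * dot (ray n beta (S i)) v)
      by (intros; unfold dot; simpl; ring).
    rewrite !E, !dot_ray_V by lia.
    assert (cos (phi j - T i) <= cos (g i)) by (apply keyK; lia).
    assert (cos (phi j - T (S i)) <= cos (g (S i))) by (apply keyK; lia).
    replace (phi i - T i) with (g i) by (unfold phi; ring).
    replace (phi i - T (S i)) with (- g (S i)) by (rewrite phi_S by lia; ring). rewrite cos_neg.
    apply Rplus_le_compat; apply Rmult_le_compat_l; auto.
  - intros HN. destruct u as [u1 u2].
    assert (Gi : 0 < g i < PI) by (apply g_bnd; lia). assert (GS : 0 < g (S i) < PI) by (apply g_bnd; lia).
    assert (Hprev : exists p, (p < n)%nat /\ Vc p = (cos (T i - g i), sin (T i - g i))).
    { destruct i.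
      - exists (n-1)%nat. split. lia. unfold Vc. rewrite phi_last.
        replace (2 * PI - g 0%nat) with ((T 0%nat - g 0%nat) + 2 * PI) by (unfold T; simpl; ring).
        rewrite cos_2PI_add, sin_2PI_add. reflexivity.
      - exists i. split. lia. unfold Vc. rewrite phi_S by lia. reflexivity. }
    assert (Hnext : exists p, (p < n)%nat /\ Vc p = (cos (T (S i) + g (S i)), sin (T (S i) + g (S i)))).
    { destruct (Nat.eq_dec (S i) n) as [E|].
      - exists 0%nat. split. lia. unfold Vc. rewrite phi_0. rewrite E. unfold T. rewrite Hs.
        destruct Hg as [_ [_ H3]]. rewrite H3. rewrite (Rplus_comm (2 * PI)), cos_2PI_add, sin_2PI_add. reflexivity.
      - exists (S i). split. lia. reflexivity. }
    destruct Hprev as [p [Hp Vp]]. destruct Hnext as [q [Hq Vq]].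
    pose proof (HN p Hp) as Np. pose proof (HN q Hq) as Nq.
    rewrite Vp in Np. rewrite Vq in Nq.
    assert (Vi1 : Vc i = (cos (T i + g i), sin (T i + g i))) by reflexivity.
    assert (Vi2 : Vc i = (cos (T (S i) - g (S i)), sin (T (S i) - g (S i)))) by (unfold Vc; rewrite phi_S by lia; reflexivity).
    pose proof (chord (T i) (g i)) as [C1 C2]. pose proof (chord (T (S i)) (g (S i))) as [C3 C4].
    pose proof (sin_gt_0 _ (proj1 Gi) (proj2 Gi)) as Si. pose proof (sin_gt_0 _ (proj1 GS) (proj2 GS)) as SS.
    assert (X1 : 0 <= cos (T i) * u2 - sin (T i) * u1).
    { rewrite Vi1 in Np. unfold dot in Np; simpl in Np.
      assert (0 <= 2 * sin (g i) * (cos (T i) * u2 - sin (T i) * u1)) by nra. nra. }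
    assert (X2 : cos (T (S i)) * u2 - sin (T (S i)) * u1 <= 0).
    { rewrite Vi2 in Nq. unfold dot in Nq; simpl in Nq.
      assert (2 * sin (g (S i)) * (cos (T (S i)) * u2 - sin (T (S i)) * u1) <= 0) by nra. nra. }
    pose proof (ray_step n beta i Hn0 Hs) as [_ Cr]. rewrite bt_lt in Cr by auto.
    unfold region. rewrite !ray_T in Cr |- * by (first [assumption | lia]). unfold cross in Cr; simpl in Cr |- *.
    assert (Sb : 0 < sin (beta i)) by (apply sin_gt_0; apply Hb; auto).
    change (rsum beta i) with (T i) in Cr |- *. change (rsum beta (S i)) with (T (S i)) in Cr |- *.
    set (s := sin (beta i)) in *.
    exists ((u1 * sin (T (S i)) - u2 * cos (T (S i))) / s), ((cos (T i) * u2 - sin (T i) * u1) / s).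
    split; [|split].
    + unfold Rdiv; apply Rmult_le_pos; [lra| left; apply Rinv_0_lt_compat; lra].
    + unfold Rdiv; apply Rmult_le_pos; [lra| left; apply Rinv_0_lt_compat; lra].
    + assert (s <> 0) by lra. change (T (S i)) with (T i + beta i). f_equal; field_simplify_eq; auto; rewrite <- Cr; ring.
Qed.

Lemma constr_inscribable : inscribable n beta.
Proof. exists Vc, (0, 0), 1. split. lra. split.
  - intros i _. unfold Vc; simpl. pose proof (sin2_cos2 (phi i)). unfold Rsqr in H. nra.
  - apply constr_fan. Qed.
End Constr.

Definition Ps (n : nat) (beta : nat -> R) (g : nat -> R) : Prop :=
  (forall k, 0 < g k) /\ (forall k, g k + g (S k) = bt n beta k) /\ (forall k, g (k + n)%nat = g k).

Lemma recon v r : fst v * dot r r = dot r v * fst r - cross r v * snd r /\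
                  snd v * dot r r = dot r v * snd r + cross r v * fst r.
Proof. destruct v, r; unfold dot, cross; simpl; split; ring. Qed.

Lemma cross_anti p q : cross p q = - cross q p.
Proof. unfold cross; ring. Qed.

Section Extract.
Variable n : nat.
Variable beta : nat -> R.
Hypothesis Hn : (2 <= n)%nat.
Hypothesis Hb : forall i, (i < n)%nat -> 0 < beta i < PI.
Hypothesis Hs : rsum beta n = 2 * PI.
Variable V : nat -> R * R.
Variable c : R * R.
Variable r : R.
Hypothesis Hr : 0 < r.
Hypothesis Hc : forall i, (i < n)%nat -> (fst (V i) - fst c) ^ 2 + (snd (V i) - snd c) ^ 2 = r ^ 2.
Hypothesis Hf : is_normal_fan_of n beta V.

Let Hn0 : (n <> 0)%nat. Proof. lia. Qed.

Definition w j : R * R := ((fst (V j) - fst c) / r, (snd (V j) - snd c) / r).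

Lemma w_unit j : (j < n)%nat -> dot (w j) (w j) = 1.
Proof. intros Hj. pose proof (Hc j Hj). unfold dot, w; simpl.
  assert (r <> 0) by lra. field_simplify_eq; auto. nra. Qed.

Definition NC i u := forall j, (j < n)%nat -> dot u (w j) <= dot u (w i).

Lemma fan_w i u : (i < n)%nat -> (region n beta i u <-> NC i u).
Proof. intros Hi. rewrite (Hf i Hi u). unfold normal_cone, NC.
  assert (E : forall j, dot u (w j) - dot u (w i) = (dot u (V j) - dot u (V i)) / r).
  { intros. unfold dot, w; simpl. field. lra. }
  split; intros H j Hj; specialize (H j Hj); specialize (E j).
  - assert ((dot u (V j) - dot u (V i)) / r <= 0).
    { unfold Rdiv. assert (0 < / r) by (apply Rinv_0_lt_compat; lra). nra. }
    lra.
  - assert (dot u (V j) - dot u (V i) = r * (dot u (w j) - dot u (w i))) by (rewrite E; field; lra).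
    nra. Qed.

Lemma bt_range k : 0 < bt n beta k < PI.
Proof. unfold bt. apply Hb. apply Nat.mod_upper_bound. auto. Qed.

Lemma region_pt0 k : region n beta k (ray n beta (S k)).
Proof. exists 0, 1. split; [lra|split;[lra|]]. destruct (ray n beta (S k)); simpl; f_equal; ring. Qed.
Lemma region_pt1 k : region n beta k (ray n beta k).
Proof. exists 1, 0. split; [lra|split;[lra|]]. destruct (ray n beta k); simpl; f_equal; ring. Qed.

Lemma edge i : (i < n)%nat ->
  cross (ray n beta (S i)) (w i) < 0 /\ 0 < cross (ray n beta (S i)) (w (S i mod n)) /\
  dot (ray n beta (S i)) (w i) = dot (ray n beta (S i)) (w (S i mod n)).
Proof. intros Hi. set (i' := (S i mod n)%nat). assert (Hi' : (i' < n)%nat) by (apply Nat.mod_upper_bound; auto).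
  set (R0 := ray n beta (S i)). set (P := ray n beta i). set (a := w i). set (b := w i').
  assert (N1 : NC i R0) by (apply fan_w; auto; apply region_pt0).
  assert (N2 : NC i' R0). { apply fan_w; auto. unfold i'. apply (proj1 (region_mod n beta (S i) R0 Hn0)). apply region_pt1. }
  assert (N3 : NC i P) by (apply fan_w; auto; apply region_pt1).
  pose proof (N1 i' Hi') as A1. pose proof (N2 i Hi) as A2. pose proof (N3 i' Hi') as A3.
  fold a b in A1, A2, A3.
  assert (D : dot R0 a = dot R0 b) by lra.
  pose proof (ray_unit n beta (S i)) as UR. fold R0 in UR.
  pose proof (w_unit i Hi) as Ua. pose proof (w_unit i' Hi') as Ub. fold a in Ua. fold b in Ub.
  pose proof (ray_step n beta i Hn0 Hs) as [_ CP]. fold P R0 in CP.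
  pose proof (bt_range i) as Bi. pose proof (sin_gt_0 _ (proj1 Bi) (proj2 Bi)) as SB.
  pose proof (lag1 P a R0) as La. pose proof (lag1 P b R0) as Lb.
  rewrite UR in La, Lb. rewrite (cross_anti R0 P), CP in La, Lb.
  assert (CC : cross R0 a <= cross R0 b) by nra.
  pose proof (lag1 a a R0) as Qa. pose proof (lag1 b b R0) as Qb. rewrite UR, Ua in Qa. rewrite UR, Ub in Qb.
  assert (SQ : cross R0 a * cross R0 a = cross R0 b * cross R0 b) by nra.
  assert (NE : cross R0 a <> cross R0 b).
  { intros E. assert (ab : a = b).
    { pose proof (recon a R0) as [ra1 ra2]. pose proof (recon b R0) as [rb1 rb2]. rewrite UR in ra1, ra2, rb1, rb2.
      rewrite D, E in ra1, ra2. apply injective_projections; lra. }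
    assert (N4 : NC i' P). { intros j Hj. unfold b in ab. rewrite <- ab. apply N3; auto. }
    apply fan_w in N4; auto. unfold i' in N4. apply region_mod in N4; auto.
    destruct N4 as [s [t [Hs0 [Ht0 EP]]]].
    pose proof (ray_step n beta (S i) Hn0 Hs) as [_ CQ]. fold R0 in CQ.
    pose proof (bt_range (S i)) as Bi2. pose proof (sin_gt_0 _ (proj1 Bi2) (proj2 Bi2)) as SB2.
    assert (cross R0 P = t * cross R0 (ray n beta (S (S i)))).
    { rewrite EP. unfold cross. simpl. unfold R0. ring_simplify. unfold cross in CQ. unfold R0 in *. 
      destruct (ray n beta (S i)), (ray n beta (S (S i))). simpl. ring. }
    rewrite CQ, (cross_anti R0 P), CP in H. nra. }
  assert (cross R0 a < cross R0 b) by lra.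
  assert (cross R0 a = - cross R0 b) by nra.
  split; [lra| split; [lra| auto]]. Qed.

Lemma prev_exists j : (j < n)%nat -> exists i, (i < n)%nat /\ (S i mod n = j)%nat.
Proof. intros Hj. destruct j.
  - exists (n - 1)%nat. split. lia. replace (S (n-1)) with n by lia. apply Nat.Div0.mod_same.
  - exists j. split. lia. apply Nat.mod_small. auto. Qed.

Definition xx j := dot (ray n beta j) (w j).
Definition yy j := cross (ray n beta j) (w j).

Lemma yy_pos j : (j < n)%nat -> 0 < yy j.
Proof. intros Hj. destruct (prev_exists j Hj) as [i [Hi Hm]]. destruct (edge i Hi) as [_ [H _]].
  rewrite (ray_mod n beta (S i)), Hm in H. exact H. Qed.

Lemma xy_unit j : (j < n)%nat -> xx j * xx j + yy j * yy j = 1.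
Proof. intros Hj. pose proof (lag1 (w j) (w j) (ray n beta j)). rewrite ray_unit, w_unit in H by auto.
  unfold xx, yy. lra. Qed.

Definition eps j := acos (xx j).

Lemma eps_props j : (j < n)%nat -> 0 < eps j < PI /\ cos (eps j) = xx j /\ sin (eps j) = yy j.
Proof. intros Hj. pose proof (xy_unit j Hj) as U. pose proof (yy_pos j Hj) as Y.
  assert (B : -1 <= xx j <= 1) by nra.
  assert (Cs : cos (eps j) = xx j) by (apply cos_acos; auto).
  assert (Sn : sin (eps j) = yy j).
  { unfold eps. rewrite sin_acos by auto. replace (1 - (xx j)²) with ((yy j)²) by (unfold Rsqr; lra).
    apply sqrt_Rsqr. lra. }
  pose proof (acos_bound (xx j)) as AB. fold (eps j) in AB.
  split; [|split; auto].
  destruct (Req_dec (eps j) 0) as [E|]. rewrite E, sin_0 in Sn. lra.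
  destruct (Req_dec (eps j) PI) as [E|]. rewrite E, sin_PI in Sn. lra.
  lra. Qed.

Lemma eps_step j : (j < n)%nat -> eps j + eps (S j mod n) = beta j.
Proof. intros Hj. set (j' := (S j mod n)%nat). assert (Hj' : (j' < n)%nat) by (apply Nat.mod_upper_bound; auto).
  destruct (edge j Hj) as [C1 [_ D1]]. fold j' in D1.
  set (R0 := ray n beta (S j)) in *. set (P := ray n beta j).
  pose proof (lag1 R0 (w j) P) as L1. pose proof (lag2 R0 (w j) P) as L2.
  pose proof (ray_unit n beta j) as UP. fold P in UP. rewrite UP in L1, L2.
  pose proof (ray_step n beta j Hn0 Hs) as [DS CS]. fold P R0 in DS, CS. rewrite bt_lt in DS, CS by auto.
  rewrite DS, CS in L1, L2.
  destruct (eps_props j Hj) as [Bj [Cj Sj]]. unfold xx, yy in Cj, Sj. fold P in Cj, Sj.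
  rewrite <- Cj, <- Sj in L1, L2.
  assert (X1 : dot R0 (w j) = cos (beta j - eps j)) by (rewrite cos_minus; lra).
  assert (X2 : cross R0 (w j) = sin (eps j - beta j)) by (rewrite sin_minus; lra).
  assert (Bb : 0 < beta j < PI) by auto.
  assert (LT : eps j < beta j).
  { destruct (Rlt_le_dec (eps j) (beta j)); auto. assert (0 <= sin (eps j - beta j)) by (apply sin_ge_0; lra). lra. }
  assert (XJ : xx j' = cos (beta j - eps j)).
  { unfold xx. rewrite <- X1, D1. unfold R0. rewrite (ray_mod n beta (S j)). reflexivity. }
  unfold eps at 2. rewrite XJ. rewrite acos_cos by lra. ring. Qed.

End Extract.

Lemma inscr_to_Ps n beta : (2 <= n)%nat -> complete_pointed_profile n beta ->
  inscribable n beta -> exists g, Ps n beta g.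
Proof. intros Hn [Hb Hs] [V [c [r [Hr [Hc Hf]]]]].
  assert (Hn0 : (n <> 0)%nat) by lia.
  exists (fun k => eps n beta V c r (k mod n)). split; [|split].
  - intros k. apply (eps_props n beta Hn Hb Hs V c r Hr Hc Hf). apply Nat.mod_upper_bound; auto.
  - intros k. simpl. rewrite (mod_S n k Hn0). unfold bt.
    apply (eps_step n beta Hn Hb Hs V c r Hr Hc Hf). apply Nat.mod_upper_bound; auto.
  - intros k. simpl. rewrite mod_addn. reflexivity. Qed.

Lemma pow_m1_even m : (-1) ^ (2 * m) = 1.
Proof. rewrite pow_mult. replace ((-1)^2) with 1 by ring. apply pow1. Qed.
Lemma pow_m1_odd m : (-1) ^ (2 * m + 1) = -1.
Proof. rewrite pow_add, pow_m1_even. ring. Qed.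

Definition alt n beta j := rsum (fun k => (-1) ^ k * bt n beta (j + k)) n.

Lemma odd_fwd n beta g : Nat.odd n = true -> Ps n beta g -> forall j, alt n beta j = 2 * g j.
Proof. intros Ho [Hp [Hst Hper]] j. unfold alt.
  rewrite (rsum_ext _ (fun k => (-1) ^ k * g (j + k)%nat - (-1) ^ (S k) * g (j + S k)%nat)).
  - rewrite (rsum_tele (fun k => (-1) ^ k * g (j + k)%nat)). simpl.
    apply Nat.odd_spec in Ho. destruct Ho as [m ->]. rewrite pow_m1_odd.
    rewrite Nat.add_0_r. rewrite Hper. ring.
  - intros i _. rewrite <- Hst. simpl. replace (j + S i)%nat with (S (j + i)) by lia. ring. Qed.

Lemma odd_bwd n beta : (1 <= n)%nat -> Nat.odd n = true -> (forall j, (j < n)%nat -> alt n beta j > 0) ->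
  Pw n beta (fun j => alt n beta j / 2).
Proof. intros Hn Ho H. split; [|split].
  - intros k Hk. specialize (H k Hk). lra.
  - intros k Hk. rewrite <- (bt_lt n beta k Hk).
    assert (alt n beta k + alt n beta (S k) = 2 * bt n beta k); [|lra].
    apply Nat.odd_spec in Ho. destruct Ho as [m Hm].
    unfold alt. rewrite Hm. replace (2 * m + 1)%nat with (S (2 * m)) by lia.
    rewrite rsum_Sl. cbn [rsum]. rewrite Nat.add_0_r.
    rewrite (rsum_ext (fun i => (-1) ^ S i * bt (S (2*m)) beta (k + S i)%nat) (fun i => - ((-1) ^ i * bt (S (2*m)) beta (S k + i)%nat))).
    2: { intros. replace (k + S i)%nat with (S k + i)%nat by lia. rewrite <- tech_pow_Rmult. ring. }
    rewrite rsum_opp. rewrite pow_m1_even.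
    replace (S k + 2 * m)%nat with (k + S (2 * m))%nat by lia. rewrite bt_per. ring.
  - unfold alt. f_equal. apply rsum_ext. intros i _. rewrite Nat.add_0_l.
    replace (n + i)%nat with (i + n)%nat by lia. rewrite bt_per. reflexivity. Qed.

Lemma Gsum n beta g : rsum beta n = 2 * PI -> (forall k, g k + g (S k) = bt n beta k) ->
  (forall k, g (k + n)%nat = g k) -> forall a, rsum (fun k => g (a + k)%nat) n = PI.
Proof. intros Hs Hst Hper a. rewrite rsum_window by auto.
  rewrite <- (rsum_bt n beta n (le_n n)) in Hs.
  rewrite (rsum_ext _ (fun k => g k + g (S k))) in Hs by (intros; rewrite Hst; auto).
  rewrite rsum_plus in Hs. pose proof (rsum_window g n Hper 1%nat) as W. simpl in W. lra. Qed.

Lemma Lcalc n beta g m : n = (2 * m)%nat -> (1 <= m)%nat -> rsum beta n = 2 * PI ->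
  (forall k, g k + g (S k) = bt n beta k) -> (forall k, g (k + n)%nat = g k) ->
  forall h j, (h < m)%nat ->
  rsum (fun i => bt n beta (2 * (i + 1) + j)) h
  + rsum (fun i => bt n beta (2 * (i + h + 1) + 1 + j)) (m - 1 - h)
  = PI - g (j + 1)%nat - g (j + 2 * h + 2)%nat.
Proof. intros Hnm Hm Hs Hst Hper h j Hh.
  pose proof (Gsum n beta g Hs Hst Hper (j + 1)%nat) as W.
  assert (P1 : rsum (fun i => bt n beta (2 * (i + 1) + j)) h = rsum (fun k => g (j + 2 + k)%nat) (2 * h)).
  { rewrite <- rsum_pairs. apply rsum_ext. intros i _. rewrite <- Hst. f_equal; f_equal; lia. }
  assert (P2 : rsum (fun i => bt n beta (2 * (i + h + 1) + 1 + j)) (m - 1 - h)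
             = rsum (fun k => g (j + 2 * h + 3 + k)%nat) (2 * (m - 1 - h))).
  { rewrite <- rsum_pairs. apply rsum_ext. intros i _. rewrite <- Hst. f_equal; f_equal; lia. }
  rewrite P1, P2.
  replace n with (1 + (2 * h + (1 + 2 * (m - 1 - h))))%nat in W by lia.
  rewrite !rsum_add in W. cbn [rsum] in W.
  rewrite (rsum_ext (fun i => g (j + 1 + (1 + i))%nat) (fun k => g (j + 2 + k)%nat)) in W by (intros; f_equal; lia).
  rewrite (rsum_ext (fun i => g (j + 1 + (1 + (2 * h + (1 + i))))%nat) (fun k => g (j + 2 * h + 3 + k)%nat)) in W by (intros; f_equal; lia).
  replace (j + 1 + (1 + (2 * h + 0)))%nat with (j + 2 * h + 2)%nat in W by lia.
  replace (j + 1 + 0)%nat with (j + 1)%nat in W by lia. lra. Qed.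

Fixpoint fg n beta k : R := match k with O => 0 | S k' => bt n beta k' - fg n beta k' end.

Lemma fg_step n beta k : fg n beta k + fg n beta (S k) = bt n beta k.
Proof. simpl. ring. Qed.

Lemma fg_even n beta i : fg n beta (2 * i) = rsum (fun l => bt n beta (2 * l + 1) - bt n beta (2 * l)) i.
Proof. induction i. reflexivity. replace (2 * S i)%nat with (S (S (2 * i))) by lia.
  cbn [fg rsum]. rewrite <- IHi. replace (2 * i + 1)%nat with (S (2 * i)) by lia. ring. Qed.

Lemma fg_per n beta m : n = (2 * m)%nat -> rsum beta n = 2 * PI ->
  rsum (fun l => beta (2 * l)%nat) m = PI -> forall k, fg n beta (k + n) = fg n beta k.
Proof. intros Hnm Hs He.
  assert (F0 : fg n beta n = 0).
  { pose proof (rsum_pairs (bt n beta) m) as RP. rewrite <- Hnm, rsum_bt in RP by lia. rewrite Hs in RP.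
    rewrite rsum_plus in RP.
    rewrite (rsum_ext (fun i => bt n beta (2 * i)) (fun l => beta (2 * l)%nat)) in RP by (intros; apply bt_lt; lia).
    rewrite Hnm at 2. rewrite fg_even.
    rewrite (rsum_ext _ (fun l => bt n beta (2 * l + 1) + - beta (2 * l)%nat)) by (intros; rewrite (bt_lt n beta (2 * i)) by lia; ring).
    rewrite rsum_plus, rsum_opp. lra. }
  induction k. simpl. rewrite F0. reflexivity.
  simpl. rewrite IHk, bt_per. reflexivity. Qed.

Lemma argmin (f : nat -> R) m : (1 <= m)%nat -> exists a, (a < m)%nat /\ forall b, (b < m)%nat -> f a <= f b.
Proof. induction m; intros Hm. lia. destruct m.
  - exists 0%nat. split. lia. intros b Hb. replace b with 0%nat by lia. lra.
  - destruct IHm as [a [Ha H]]. lia.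
    destruct (Rle_dec (f a) (f (S m))).
    + exists a. split. lia. intros b Hb. destruct (Nat.eq_dec b (S m)) as [->|]; auto. apply H; lia.
    + exists (S m). split. lia. intros b Hb. destruct (Nat.eq_dec b (S m)) as [->|]. lra.
      assert (f a <= f b) by (apply H; lia). lra. Qed.

Lemma even_bwd n beta m : n = (2 * m)%nat -> (1 <= m)%nat -> rsum beta n = 2 * PI ->
  rsum (fun l => beta (2 * l)%nat) m = PI ->
  (forall h j, (h < m)%nat -> (j < n)%nat ->
        rsum (fun i => bt n beta (2 * (i + 1) + j)) h
        + rsum (fun i => bt n beta (2 * (i + h + 1) + 1 + j)) (m - 1 - h) < PI) ->
  exists g, Pw n beta g.
Proof. intros Hnm Hm Hs He Hc.
  set (f := fg n beta).
  assert (Hper : forall k, f (k + n)%nat = f k) by (apply (fg_per n beta m); auto).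
  assert (Hst : forall k, f k + f (S k) = bt n beta k) by (intros; apply fg_step).
  assert (Q : forall h j, (h < m)%nat -> (j < n)%nat -> 0 < f (j + 1)%nat + f (j + 2 * h + 2)%nat).
  { intros h j Hh Hj. pose proof (Hc h j Hh Hj). rewrite (Lcalc n beta f m Hnm Hm Hs Hst Hper h j Hh) in H. lra. }
  assert (PR : forall a b, (a < m)%nat -> (b < m)%nat -> 0 < f (2 * a)%nat + f (2 * b + 1)%nat).
  { intros a b Ha Hb. destruct (Nat.eq_dec a 0) as [->|].
    - pose proof (Q (m - b - 1)%nat (2 * b)%nat ltac:(lia) ltac:(lia)).
      replace (2 * b + 2 * (m - b - 1) + 2)%nat with (0 + n)%nat in H by lia. rewrite Hper in H.
      replace (2 * 0)%nat with 0%nat by lia. lra.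
    - destruct (le_lt_dec a b).
      + pose proof (Q (b - a)%nat (2 * a - 1)%nat ltac:(lia) ltac:(lia)).
        replace (2 * a - 1 + 1)%nat with (2 * a)%nat in H by lia.
        replace (2 * a - 1 + 2 * (b - a) + 2)%nat with (2 * b + 1)%nat in H by lia. lra.
      + pose proof (Q (a - b - 1)%nat (2 * b)%nat ltac:(lia) ltac:(lia)).
        replace (2 * b + 2 * (a - b - 1) + 2)%nat with (2 * a)%nat in H by lia. lra. }
  destruct (argmin (fun l => f (2 * l)%nat) m Hm) as [a [Ha HA]].
  destruct (argmin (fun l => f (2 * l + 1)%nat) m Hm) as [b [Hb HB]].
  pose proof (PR a b Ha Hb) as AB.
  set (t := (f (2 * b + 1)%nat - f (2 * a)%nat) / 2).
  exists (fun k => f k + (-1) ^ k * t). split; [|split].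
  - intros k Hk. destruct (Nat.Even_or_Odd k) as [[l ->]|[l ->]].
    + rewrite pow_m1_even. assert (f (2 * a)%nat <= f (2 * l)%nat) by (apply HA; lia). unfold t. lra.
    + rewrite pow_m1_odd. assert (f (2 * b + 1)%nat <= f (2 * l + 1)%nat) by (apply HB; lia). unfold t. lra.
  - intros k Hk. rewrite <- (bt_lt n beta k Hk), <- Hst. simpl pow. ring.
  - rewrite Hnm at 2. rewrite pow_m1_even. replace n with (0 + n)%nat by lia. rewrite Hper. simpl. ring.
Qed.

Definition rot (p : R) (x : R * R) : R * R :=
  (cos p * fst x - sin p * snd x, sin p * fst x + cos p * snd x).

Lemma refl_form a x : refl (cos a, sin a) x = (cos (2 * a) * fst x + sin (2 * a) * snd x, sin (2 * a) * fst x - cos (2 * a) * snd x).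
Proof. unfold refl, dot; simpl. f_equal.
  - rewrite cos_2a_cos, sin_2a. ring.
  - rewrite cos_2a_sin, sin_2a. ring. Qed.

Lemma refl2 a b x : refl (cos b, sin b) (refl (cos a, sin a) x) = rot (2 * (b - a)) x.
Proof. rewrite !refl_form. unfold rot; simpl.
  replace (2 * (b - a)) with (2 * b - 2 * a) by ring. rewrite cos_minus, sin_minus. f_equal; ring. Qed.

Lemma rot_comp p q x : rot p (rot q x) = rot (p + q) x.
Proof. unfold rot; simpl. rewrite cos_plus, sin_plus. f_equal; ring. Qed.

Lemma rot_0 x : rot 0 x = x.
Proof. unfold rot. rewrite cos_0, sin_0. destruct x; simpl; f_equal; ring. Qed.

Lemma comp_even n beta m v : n = (2 * m)%nat -> rsum beta n = 2 * PI -> forall i, (i <= m)%nat ->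
  comp_refl n beta (2 * i) v = rot (2 * rsum (fun l => beta (2 * l)%nat) i) v.
Proof. intros Hnm Hs i. induction i; intros Hi.
  - simpl. replace (2 * 0) with 0 by ring. rewrite rot_0. reflexivity.
  - replace (2 * S i)%nat with (S (S (2 * i))) by lia. cbn [comp_refl].
    rewrite IHi by lia. rewrite !ray_T by (first [lia | assumption]).
    rewrite refl2, rot_comp. f_equal. cbn [rsum]. replace (2 * i + 0)%nat with (2 * i)%nat by lia.
    replace (i + (i + 0))%nat with (2 * i)%nat by lia. ring. Qed.

Lemma virt_even n beta m : n = (2 * m)%nat -> (1 <= m)%nat -> complete_pointed_profile n beta ->
  virtually_inscribable n beta -> rsum (fun l => beta (2 * l)%nat) m = PI.
Proof. intros Hnm Hm [Hb Hs] [v [Hv Hf]].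
  set (Se := rsum (fun l => beta (2 * l)%nat) m).
  assert (Sp : 0 < Se) by (apply rsum_pos; auto; intros; apply Hb; lia).
  assert (So : 0 < rsum (fun l => beta (2 * l + 1)%nat) m) by (apply rsum_pos; auto; intros; apply Hb; lia).
  assert (Tot : Se + rsum (fun l => beta (2 * l + 1)%nat) m = 2 * PI).
  { unfold Se. rewrite <- rsum_plus, rsum_pairs, <- Hnm. auto. }
  rewrite Hnm in Hf at 2. rewrite (comp_even n beta m v Hnm Hs m (le_n m)) in Hf. fold Se in Hf.
  destruct v as [v1 v2]. unfold rot in Hf; simpl in Hf. injection Hf as E1 E2.
  set (c := cos (2 * Se)) in *. set (s := sin (2 * Se)) in *.
  assert (CS : s * s + c * c = 1) by (pose proof (sin2_cos2 (2 * Se)); unfold Rsqr in H; auto).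
  assert (C1 : c = 1).
  { destruct (Req_dec c 1) as [|Hc]; auto. exfalso. apply Hv.
    assert (K : 0 < 2 - 2 * c) by nra.
    assert (A1 : (2 - 2 * c) * v1 = 0).
    { replace ((2 - 2 * c) * v1) with ((c - 1) * (c * v1 - s * v2 - v1) + s * (s * v1 + c * v2 - v2) + (1 - (s * s + c * c)) * v1) by ring. rewrite CS, E1, E2. ring. }
    assert (A2 : (2 - 2 * c) * v2 = 0).
    { replace ((2 - 2 * c) * v2) with ((c - 1) * (s * v1 + c * v2 - v2) - s * (c * v1 - s * v2 - v1) + (1 - (s * s + c * c)) * v2) by ring. rewrite CS, E1, E2. ring. }
    apply Rmult_integral in A1, A2. destruct A1; [lra|]. destruct A2; [lra|]. subst. reflexivity. }
  unfold c in C1. rewrite cos_2a_sin in C1.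
  assert (sin Se = 0) by nra.
  destruct (sin_eq_0_0 Se H) as [k Hk].
  pose proof PI_RGT_0.
  assert (0 < IZR k) by nra. assert (IZR k < 2) by nra.
  apply lt_IZR in H1. apply lt_IZR in H2. assert (k = 1%Z) by lia. subst k. rewrite Hk. simpl. ring. Qed.

Theorem theorem3p5 (n : nat) (beta : nat -> R) :
  (3 <= n)%nat ->
  complete_pointed_profile n beta ->
  virtually_inscribable n beta ->
  (Nat.odd n = true ->
     (inscribable n beta <->
      forall j, (j < n)%nat ->
        rsum (fun k => (-1) ^ k * bt n beta (j + k)) n > 0)) /\
  (forall m, n = (2 * m)%nat ->
     (inscribable n beta <->
      forall h j, (h < m)%nat -> (j < n)%nat ->
        rsum (fun i => bt n beta (2 * (i + 1) + j)) h
        + rsum (fun i => bt n beta (2 * (i + h + 1) + 1 + j)) (m - 1 - h) < PI)).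
Proof.
  intros Hn3 Hcp Hvi. assert (Hn2 : (2 <= n)%nat) by lia. pose proof Hcp as [Hb Hs]. split.
  - intros Ho. split.
    + intros Hins j Hj. destruct (inscr_to_Ps n beta Hn2 Hcp Hins) as [g Hg].
      change (alt n beta j > 0). rewrite (odd_fwd n beta g Ho Hg j). destruct Hg as [Hp _].
      specialize (Hp j). lra.
    + intros H. apply (constr_inscribable n beta (fun j => alt n beta j / 2) Hn2 Hb Hs).
      apply odd_bwd; auto. lia.
  - intros m Hnm. assert (Hm : (1 <= m)%nat) by lia. split.
    + intros Hins h j Hh Hj. destruct (inscr_to_Ps n beta Hn2 Hcp Hins) as [g [Hp [Hst Hper]]].
      rewrite (Lcalc n beta g m Hnm Hm Hs Hst Hper h j Hh).
      pose proof (Hp (j + 1)%nat). pose proof (Hp (j + 2 * h + 2)%nat). lra.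
    + intros H. destruct (even_bwd n beta m Hnm Hm Hs (virt_even n beta m Hnm Hm Hcp Hvi) H) as [g Hg].
      apply (constr_inscribable n beta g Hn2 Hb Hs Hg).
Qed.
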